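(* Let $G$ be a finite group and $T$ a $G$-transfer system with exactly one connected component. Then $T$ is lesser simply paired; in fact the only $G$-transfer system $T'$ with $(T,T')$ compatible is $T'=T_c=\mathrm{Hull}(T)$.
   Context: A $G$-transfer system is a partial order $\to$ on the set of subgroups of $G$ such that: $K\to H$ implies $K\le H$; $H\to H$ for all $H$; $L\to K$ and $K\to H$ imply $L\to H$; $K\to H$ implies $K\cap L\to H\cap L$ for every $L\le G$; $K\to H$ implies $gKg^{-1}\to gHg^{-1}$ for all $g\in G$. Connected components are those of the underlying undirected graph on subgroups with edges $K\to H$. A transfer system is saturated if whenever $L\le K\le H$ and $L\to H$ is in it, then $K\to H$ is in it; $\mathrm{Hull}(T)$ is the smallest saturated $G$-transfer system containing $T$; $T_c$ is the complete transfer system containing $K\to H$ for all $K\le H$. A pair $(T,T')$ is compatible if (1) $T\subseteq T'$, and (2) for all subgroups $A,B,C$ with $B,C\le A$: if $B\to A$ is in $T$ and $B\cap C\to B$ is in $T'$, then $C\to A$ is in $T'$. $T$ is lesser simply paired if for every $G$-transfer system $T'\supseteq T$, $(T,T')$ is compatible if and only if $T'\in\{\mathrm{Hull}(T),T_c\}$. *)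

(* Defs.v *)
From mathcomp Require Import all_boot all_fingroup.
From Stdlib Require Import Relations.
Set Implicit Arguments. Unset Strict Implicit. Unset Printing Implicit Defensive.

Local Open Scope group_scope.

(* A relation on subgroups of G: trel gT K H stands for K -> H. *)
Definition trel (gT : finGroupType) := {group gT} -> {group gT} -> Prop.

Section TS.
Variables (gT : finGroupType) (G : {group gT}).

(* G-transfer system: a partial order on the subgroups of G (antisymmetry
   follows from the refinement of inclusion) satisfying the axioms. *)
Definition transfer_system (T : trel gT) : Prop :=
  [/\ (forall K H, T K H -> [/\ K \subset H, K \subset G & H \subset G]),
      (forall H : {group gT}, H \subset G -> T H H),
      (forall L K H, T L K -> T K H -> T L H),
      (forall K H L : {group gT}, T K H -> L \subset G ->
          T (K :&: L)%G (H :&: L)%G) &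
      (forall K H g, T K H -> g \in G -> T (K :^ g)%G (H :^ g)%G)].

Definition sub_trel (T T' : trel gT) : Prop := forall K H, T K H -> T' K H.
Definition eq_trel (T T' : trel gT) : Prop := forall K H, T K H <-> T' K H.

Definition undirected (T : trel gT) : relation {group gT} :=
  fun K H => T K H \/ T H K.

(* T has exactly one connected component (the set of subgroups of G is
   nonempty, so this means any two subgroups of G are connected). *)
Definition one_component (T : trel gT) : Prop :=
  forall H K : {group gT}, H \subset G -> K \subset G ->
    clos_refl_sym_trans _ (undirected T) H K.

Definition saturated (T : trel gT) : Prop :=
  forall L K H : {group gT}, L \subset K -> K \subset H -> T L H -> T K H.

Definition Hull (T : trel gT) : trel gT :=
  fun K H => forall S : trel gT,
    transfer_system S -> saturated S -> sub_trel T S -> S K H.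

Definition Tc : trel gT := fun K H => K \subset H /\ H \subset G.

Definition compatible (T T' : trel gT) : Prop :=
  sub_trel T T' /\
  forall A B C : {group gT}, B \subset A -> C \subset A ->
    T B A -> T' (B :&: C)%G B -> T' C A.

Definition lesser_simply_paired (T : trel gT) : Prop :=
  forall T' : trel gT, transfer_system T' -> sub_trel T T' ->
    (compatible T T' <-> (eq_trel T' (Hull T) \/ eq_trel T' Tc)).

End TS.

(* Main.v *)
Require Import Defs.
From mathcomp Require Import all_boot all_fingroup.
From Stdlib Require Import Relations.
Set Implicit Arguments. Unset Strict Implicit. Unset Printing Implicit Defensive.

Local Open Scope group_scope.

Lemma Tc_ts (gT : finGroupType) (G : {group gT}) : transfer_system G (Tc G).
Proof.
split.
- move=> K H [KH HG]; split => //; exact: subset_trans KH HG.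
- by move=> H HG; split.
- move=> L K H [LK KG] [KH HG]; split => //; exact: subset_trans LK KH.
- move=> K H L [KH HG] LG; split; first exact: setSI.
  exact: subset_trans (subsetIl _ _) HG.
- move=> K H g [KH HG] gG; split; first by rewrite conjSg.
  by rewrite -(conjGid gG) conjSg.
Qed.

Lemma one_all (gT : finGroupType) (G : {group gT}) (T : trel gT) :
  transfer_system G T -> one_component G T ->
  forall H : {group gT}, H \subset G -> T 1%G H.
Proof.
move=> [Tsub Trefl Ttr Tres Tconj] Hc H HG.
have inv : forall x y, clos_refl_sym_trans _ (undirected T) x y ->
   (T 1%G x <-> T 1%G y).
  have edge : forall K H0, T K H0 -> (T 1%G K <-> T 1%G H0).
    move=> K H0 KH; split => [h1|h1]; first exact: Ttr h1 KH.
    have [sKH sKG _] := Tsub _ _ KH.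
    have := Tres _ _ K h1 sKG.
    have -> : (1 :&: K)%G = 1%G by apply: val_inj => /=; rewrite setI1g.
    suff -> : (H0 :&: K)%G = K by [].
    by apply: val_inj => /=; apply/setIidPr.
  move=> x y; elim => {x y}.
  - by move=> x y [h|h]; [apply: edge | apply: iff_sym; apply: edge].
  - by [].
  - by move=> x y _ h; apply: iff_sym.
  - by move=> x y z _ h1 _ h2; apply: iff_trans h1 h2.
apply/(inv 1%G H); first exact: Hc (sub1G _) HG.
exact: Trefl (sub1G _).
Qed.

Theorem mainTheorem8 (gT : finGroupType) (G : {group gT}) (T : trel gT) :
  transfer_system G T -> one_component G T ->
  lesser_simply_paired G T /\
  (forall T' : trel gT, transfer_system G T' -> sub_trel T T' ->
     (compatible T T' <-> eq_trel T' (Tc G))) /\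
  eq_trel (Hull G T) (Tc G).
Proof.
move=> Tts Hc.
have one := one_all Tts Hc.
have [Tsub _ _ _ _] := Tts.
have hull : eq_trel (Hull G T) (Tc G).
  move=> K H; split.
  - move=> h; apply: (h (Tc G) (Tc_ts G)).
    + by move=> L K0 H0 _ KH0 [_ HG0]; split.
    + by move=> K0 H0 /Tsub [? _ ?]; split.
  - move=> [KH HG] S _ Ssat Ssub.
    exact: (Ssat 1%G K H (sub1G _) KH (Ssub _ _ (one _ HG))).
have comp : forall T' : trel gT, transfer_system G T' -> sub_trel T T' ->
     (compatible T T' <-> eq_trel T' (Tc G)).
  move=> T' [T'sub T'refl _ _ _] sTT'; split.
  - move=> [_ hc] K H; split.
    + by move=> /T'sub [].
    + move=> [KH HG]; apply: (hc H 1%G K (sub1G _) KH (one _ HG)).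
      have -> : (1 :&: K)%G = 1%G by apply: val_inj => /=; rewrite setI1g.
      exact: T'refl (sub1G _).
  - move=> e; split => // A B C BA CA /Tsub [_ _ AG] _.
    by apply/e; split.
split; last split => //.
move=> T' ts s; have [c1 c2] := comp T' ts s; split.
  by move=> /c1 e; right.
move=> [e|e]; apply: c2 => // K H; apply: iff_trans (e K H) _; exact: hull.
Qed.
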